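(* Let $\varphi(s,v)=\vec c(s)+v\vec q(s)$ be a developable timelike ruled surface of type $M^1_+$ in $\mathbb{R}^3_1$, and let $R$ be a nonzero constant. A developable spacelike ruled surface $\varphi^*$ of type $M^2_+$ with striction curve $\vec c^*=\vec c+R\vec a$ is a Mannheim offset of $\varphi$ if and only if $$\frac{d\kappa}{ds}=-\frac{1}{R}\left(R^2\kappa^2\left(\frac{ds_1}{ds}\right)^2+1\right)-\frac{1}{ds_1/ds}\frac{d^2s_1}{ds^2}\kappa .$$
   Context: Work in Minkowski 3-space $\mathbb{R}^3_1$ with $\langle x,y\rangle=-x_1y_1+x_2y_2+x_3y_3$, $\|x\|=\sqrt{|\langle x,x\rangle|}$, and Lorentzian cross product $x\times y=(x_2y_3-x_3y_2,\,x_1y_3-x_3y_1,\,x_2y_1-x_1y_2)$. A ruled surface is $\varphi(s,v)=\vec c(s)+v\vec q(s)$ with $\vec q$ a unit non-null vector field, $d\vec q/ds$ non-null, $\vec c$ the striction curve ($\langle d\vec q/ds,d\vec c/ds\rangle=0$) and $s$ the arc length of $\vec c$. Its Frenet frame $\{\vec q,\vec h,\vec a\}$ has central normal $\vec h=\frac{d\vec q/ds}{\|d\vec q/ds\|}$ and asymptotic normal $\vec a=\frac{(d\vec q/ds)\times\vec q}{\|d\vec q/ds\|}$. Type $M^1_+$: $\vec q$ and $\vec h$ spacelike (a timelike surface); type $M^2_+$: $\vec h$ timelike, $\vec q$ and $d\vec q/ds$ spacelike (a spacelike surface). Let $s_1$ be the arc length of the spherical image of $\vec q$ and $\kappa$ the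 conical curvature of the directing cone; for type $M^1_+$: $d\vec q/ds_1=\vec h$, $d\vec h/ds_1=-\vec q+\kappa\vec a$, $d\vec a/ds_1=\kappa\vec h$. A ruled surface is developable iff its distribution parameter $\det(d\vec c/ds,\vec q,d\vec q/ds)/\langle d\vec q/ds,d\vec q/ds\rangle$ vanishes identically. A ruled surface $\varphi^*(s,v)=\vec c^*(s)+v\vec q^*(s)$ with striction curve $\vec c^*$ and Frenet frame $\{\vec q^*,\vec h^*,\vec a^*\}$ is a Mannheim offset of $\varphi$ if its rulings correspond one-to-one with those of $\varphi$ and $\vec h^*=\vec a$. *)

(* Defs.v *)
From Stdlib Require Import Reals.
From Coquelicot Require Import Coquelicot.
Open Scope R_scope.

Record V3 : Type := mkV { x1 : R ; x2 : R ; x3 : R }.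

Definition vadd (u v : V3) : V3 := mkV (x1 u + x1 v) (x2 u + x2 v) (x3 u + x3 v).
Definition vscal (k : R) (u : V3) : V3 := mkV (k * x1 u) (k * x2 u) (k * x3 u).
Definition vopp (u : V3) : V3 := vscal (-1) u.

Definition lip (u v : V3) : R := - x1 u * x1 v + x2 u * x2 v + x3 u * x3 v.
Definition lnorm (u : V3) : R := sqrt (Rabs (lip u u)).
Definition lcross (u v : V3) : V3 :=
  mkV (x2 u * x3 v - x3 u * x2 v)
      (x1 u * x3 v - x3 u * x1 v)
      (x2 u * x1 v - x1 u * x2 v).
Definition det3 (u v w : V3) : R :=
  x1 u * (x2 v * x3 w - x3 v * x2 w)
  - x2 u * (x1 v * x3 w - x3 v * x1 w)
  + x3 u * (x1 v * x2 w - x2 v * x1 w).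

Definition spacelike (u : V3) : Prop := lip u u > 0.
Definition timelike (u : V3) : Prop := lip u u < 0.

Definition dV (f : R -> V3) (s : R) : V3 :=
  mkV (Derive (fun t => x1 (f t)) s)
      (Derive (fun t => x2 (f t)) s)
      (Derive (fun t => x3 (f t)) s).
Definition diffV (f : R -> V3) (s : R) : Prop :=
  ex_derive (fun t => x1 (f t)) s /\
  ex_derive (fun t => x2 (f t)) s /\
  ex_derive (fun t => x3 (f t)) s.

Definition inI (a0 b0 : Rbar) (s : R) : Prop :=
  Rbar_lt a0 (Finite s) /\ Rbar_lt (Finite s) b0.

(** Frenet frame {q, h, a} of the ruled surface c(s) + v q(s) *)
Definition hvec (q : R -> V3) (s : R) : V3 :=
  vscal (/ lnorm (dV q s)) (dV q s).
Definition avec (q : R -> V3) (s : R) : V3 :=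
  vscal (/ lnorm (dV q s)) (lcross (dV q s) (q s)).

(** Ruled surface phi(s,v) = c(s) + v q(s) at the parameter value s:
    q unit non-null, dq/ds non-null, c the striction curve. *)
Definition ruled_surface_at (c q : R -> V3) (s : R) : Prop :=
  diffV c s /\ diffV q s /\
  Rabs (lip (q s) (q s)) = 1 /\
  lip (dV q s) (dV q s) <> 0 /\
  lip (dV q s) (dV c s) = 0.

Definition arclength_at (c : R -> V3) (s : R) : Prop :=
  Rabs (lip (dV c s) (dV c s)) = 1.

Definition distribution_parameter (c q : R -> V3) (s : R) : R :=
  det3 (dV c s) (q s) (dV q s) / lip (dV q s) (dV q s).

(** types: M^1_+ (q, h spacelike; timelike surface),
           M^2_+ (q spacelike, h timelike; spacelike surface) *)
Definition typeM1p (q : R -> V3) (s : R) : Prop :=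
  spacelike (q s) /\ spacelike (hvec q s).
Definition typeM2p (q : R -> V3) (s : R) : Prop :=
  spacelike (q s) /\ timelike (hvec q s).

(** s1 = arc length of the spherical image of q (ds1/ds = ||dq/ds||),
    kappa = conical curvature, defined by the Frenet formula
    dh/ds1 = -q + kappa a, i.e. dh/ds = (ds1/ds) (-q + kappa a). *)
Definition conical_data_at (q : R -> V3) (s1 kappa : R -> R) (s : R) : Prop :=
  ex_derive s1 s /\ Derive s1 s = lnorm (dV q s) /\
  diffV (hvec q) s /\
  dV (hvec q) s =
    vscal (Derive s1 s) (vadd (vopp (q s)) (vscal (kappa s) (avec q s))).

(** Mannheim offset: phi*(s,v) = c*(s) + v q*(s) (rulings correspond through
    the common parameter s) with h* = a.  As the ruled surface phi* does not
    depend on the orientation of its ruling direction (q* and -q* give the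
    same surface), we allow either orientation of q*. *)
Definition mannheim_offset_on (a0 b0 : Rbar) (q qs : R -> V3) : Prop :=
  exists sg : R, (sg = 1 \/ sg = -1) /\
    forall s, inI a0 b0 s ->
      hvec (fun t => vscal sg (qs t)) s = avec q s.

(* Main.v *)
Require Import Defs.
From Stdlib Require Import Reals.
From Coquelicot Require Import Coquelicot.
From Stdlib Require Import Ranalysis5 Lra Psatz Classical.
Open Scope R_scope.

Lemma exd_plus (f g : R -> R) x : ex_derive f x -> ex_derive g x -> ex_derive (fun t => f t + g t) x.
Proof. exact (ex_derive_plus f g x). Qed.
Lemma exd_minus (f g : R -> R) x : ex_derive f x -> ex_derive g x -> ex_derive (fun t => f t - g t) x.
Proof. exact (ex_derive_minus f g x). Qed.
Lemma exd_mult (f g : R -> R) x : ex_derive f x -> ex_derive g x -> ex_derive (fun t => f t * g t) x.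
Proof. exact (ex_derive_mult f g x). Qed.
Lemma exd_scal (f : R -> R) k x : ex_derive f x -> ex_derive (fun t => k * f t) x.
Proof. exact (ex_derive_scal f k x). Qed.

Lemma V3_eq (u v : V3) : x1 u = x1 v -> x2 u = x2 v -> x3 u = x3 v -> u = v.
Proof. destruct u, v; simpl; intros; subst; reflexivity. Qed.

Ltac vring := apply V3_eq; unfold lip, vadd, vscal, vopp, lcross, det3; simpl; ring.

Lemma inI_loc a0 b0 s : inI a0 b0 s -> locally s (inI a0 b0).
Proof.
  intros Hs. apply (locally_open (T:=R_UniformSpace) (fun u : R => Rbar_lt a0 (Finite u) /\ Rbar_lt (Finite u) b0)).
  - apply open_and. apply open_Rbar_gt. apply open_Rbar_lt.
  - intros x Hx; exact Hx.
  - exact Hs.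
Qed.

Lemma dV_ext_loc (f g : R -> V3) s :
  locally s (fun t => f t = g t) -> dV f s = dV g s.
Proof.
  intros H. unfold dV. f_equal; apply Derive_ext_loc;
  apply (filter_imp _ _ (fun t e => f_equal _ e) H).
Qed.

Lemma diffV_ext_loc (f g : R -> V3) s :
  locally s (fun t => f t = g t) -> diffV f s -> diffV g s.
Proof.
  intros H [h1 [h2 h3]]. repeat split.
  - eapply ex_derive_ext_loc; [|exact h1]; apply (filter_imp _ _ (fun t e => f_equal x1 e) H).
  - eapply ex_derive_ext_loc; [|exact h2]; apply (filter_imp _ _ (fun t e => f_equal x2 e) H).
  - eapply ex_derive_ext_loc; [|exact h3]; apply (filter_imp _ _ (fun t e => f_equal x3 e) H).
Qed.

Lemma dV_vadd (f g : R -> V3) s : diffV f s -> diffV g s ->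
  dV (fun t => vadd (f t) (g t)) s = vadd (dV f s) (dV g s).
Proof.
  intros [f1 [f2 f3]] [g1 [g2 g3]]. unfold dV, vadd; simpl.
  f_equal; apply Derive_plus; assumption.
Qed.

Lemma diffV_vadd (f g : R -> V3) s : diffV f s -> diffV g s ->
  diffV (fun t => vadd (f t) (g t)) s.
Proof.
  intros [f1 [f2 f3]] [g1 [g2 g3]]. unfold vadd; repeat split; simpl;
  apply exd_plus; assumption.
Qed.

Lemma dV_vscal (k : R -> R) (f : R -> V3) s : ex_derive k s -> diffV f s ->
  dV (fun t => vscal (k t) (f t)) s =
  vadd (vscal (Derive k s) (f s)) (vscal (k s) (dV f s)).
Proof.
  intros hk [f1 [f2 f3]]. unfold dV, vadd, vscal; simpl.
  f_equal; rewrite Derive_mult; auto.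
Qed.

Lemma diffV_vscal (k : R -> R) (f : R -> V3) s : ex_derive k s -> diffV f s ->
  diffV (fun t => vscal (k t) (f t)) s.
Proof.
  intros hk [f1 [f2 f3]]. unfold vscal; repeat split; simpl;
  apply exd_mult; assumption.
Qed.

Lemma dV_cscal (k : R) (f : R -> V3) s :
  dV (fun t => vscal k (f t)) s = vscal k (dV f s).
Proof. unfold dV, vscal; simpl. f_equal; apply Derive_scal. Qed.

Lemma diffV_cscal (k : R) (f : R -> V3) s : diffV f s ->
  diffV (fun t => vscal k (f t)) s.
Proof.
  intros [f1 [f2 f3]]. unfold vscal; repeat split; simpl;
  apply exd_scal; assumption.
Qed.

Definition lipE (f g : R -> V3) := fun t => -1 * (x1 (f t) * x1 (g t)) + x2 (f t) * x2 (g t) + x3 (f t) * x3 (g t).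

Lemma ex_derive_lipE (f g : R -> V3) s : diffV f s -> diffV g s ->
  ex_derive (lipE f g) s.
Proof.
  intros [f1 [f2 f3]] [g1 [g2 g3]]. unfold lipE.
  apply exd_plus. apply exd_plus.
  apply exd_scal, exd_mult; auto.
  apply exd_mult; auto. apply exd_mult; auto.
Qed.

Lemma ex_derive_lip (f g : R -> V3) s : diffV f s -> diffV g s ->
  ex_derive (fun t => lip (f t) (g t)) s.
Proof.
  intros hf hg. apply (ex_derive_ext (lipE f g)).
  intros t; unfold lipE, lip; simpl; ring. apply ex_derive_lipE; auto.
Qed.

Lemma Derive_lip (f g : R -> V3) s : diffV f s -> diffV g s ->
  Derive (fun t => lip (f t) (g t)) s = lip (dV f s) (g s) + lip (f s) (dV g s).
Proof.
  intros hf hg. rewrite (Derive_ext _ (lipE f g)) by (intros; unfold lipE, lip; ring).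
  destruct hf as [f1 [f2 f3]], hg as [g1 [g2 g3]]. unfold lipE, lip, dV; simpl.
  rewrite Derive_plus. rewrite Derive_plus.
  rewrite Derive_scal. rewrite !Derive_mult by auto. ring.
  apply exd_scal, exd_mult; auto.
  apply exd_mult; auto.
  apply exd_plus. apply exd_scal, exd_mult; auto.
  apply exd_mult; auto. apply exd_mult; auto.
Qed.

Lemma dV_lcross (f g : R -> V3) s : diffV f s -> diffV g s ->
  dV (fun t => lcross (f t) (g t)) s = vadd (lcross (dV f s) (g s)) (lcross (f s) (dV g s)).
Proof.
  intros [f1 [f2 f3]] [g1 [g2 g3]]. unfold lcross, dV, vadd; simpl.
  f_equal; rewrite Derive_minus by (apply exd_mult; auto);
  rewrite !Derive_mult by auto; ring.
Qed.

Lemma diffV_lcross (f g : R -> V3) s : diffV f s -> diffV g s ->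
  diffV (fun t => lcross (f t) (g t)) s.
Proof.
  intros [f1 [f2 f3]] [g1 [g2 g3]]. unfold lcross; repeat split; simpl;
  apply exd_minus; apply exd_mult; auto.
Qed.

Lemma lip_sym u v : lip u v = lip v u.
Proof. unfold lip; ring. Qed.
Lemma lip_vadd_l u v w : lip (vadd u v) w = lip u w + lip v w.
Proof. unfold lip, vadd; simpl; ring. Qed.
Lemma lip_vscal_l k u w : lip (vscal k u) w = k * lip u w.
Proof. unfold lip, vscal; simpl; ring. Qed.
Lemma lip_vopp_l u w : lip (vopp u) w = - lip u w.
Proof. unfold lip, vopp, vscal; simpl; ring. Qed.
Lemma lip_vadd_r u v w : lip w (vadd u v) = lip w u + lip w v.
Proof. unfold lip, vadd; simpl; ring. Qed.
Lemma lip_vscal_r k u w : lip w (vscal k u) = k * lip w u.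
Proof. unfold lip, vscal; simpl; ring. Qed.
Lemma lip_vopp_r u w : lip w (vopp u) = - lip w u.
Proof. unfold lip, vopp, vscal; simpl; ring. Qed.
Lemma lip_lcross_l u v : lip (lcross u v) u = 0.
Proof. unfold lip, lcross; simpl; ring. Qed.
Lemma lip_lcross_r u v : lip (lcross u v) v = 0.
Proof. unfold lip, lcross; simpl; ring. Qed.
Lemma lip_lcross_self u v :
  lip (lcross u v) (lcross u v) = - (lip u u * lip v v - lip u v ^ 2).
Proof. unfold lip, lcross; simpl; ring. Qed.
Lemma lcross_lcross u v w :
  lcross (lcross u v) w = vadd (vscal (lip v w) u) (vscal (- lip u w) v).
Proof. vring. Qed.
Lemma lip_lcross_det z u v : lip z (lcross u v) = - det3 z u v.
Proof. unfold lip, lcross, det3; simpl; ring. Qed.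
Lemma det3_lcross u v :
  det3 u v (lcross u v) = lip v v * lip u u - lip u v ^ 2.
Proof. unfold lip, lcross, det3; simpl; ring. Qed.

Definition ecross (u v : V3) : V3 :=
  mkV (x2 u * x3 v - x3 u * x2 v) (x3 u * x1 v - x1 u * x3 v) (x1 u * x2 v - x2 u * x1 v).
Definition Jv (u : V3) : V3 := mkV (- x1 u) (x2 u) (x3 u).

Lemma cramer z u v w :
  vscal (- det3 u v w) z =
  vadd (vadd (vscal (lip z u) (ecross (Jv v) (Jv w))) (vscal (lip z v) (ecross (Jv w) (Jv u))))
       (vscal (lip z w) (ecross (Jv u) (Jv v))).
Proof. unfold det3, lip, ecross, Jv, vscal, vadd; apply V3_eq; simpl; ring. Qed.

Lemma orth3_zero z u v w : lip z u = 0 -> lip z v = 0 -> lip z w = 0 ->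
  det3 u v w <> 0 -> z = mkV 0 0 0.
Proof.
  intros h1 h2 h3 hd. pose proof (cramer z u v w) as C.
  rewrite h1, h2, h3 in C. destruct z as [a b c].
  unfold vscal, vadd in C; simpl in C. injection C; intros e3 e2 e1.
  apply V3_eq; simpl.
  - apply (Rmult_eq_reg_l (- det3 u v w)). lra. intro; apply hd; lra.
  - apply (Rmult_eq_reg_l (- det3 u v w)). lra. intro; apply hd; lra.
  - apply (Rmult_eq_reg_l (- det3 u v w)). lra. intro; apply hd; lra.
Qed.


Definition HypA (a0 b0 : Rbar) (c q : R -> V3) (s1 kappa : R -> R) : Prop :=
  forall s, inI a0 b0 s ->
     ruled_surface_at c q s /\ arclength_at c s /\
     dV c s = q s /\
     diffV (dV q) s /\
     typeM1p q s /\
     distribution_parameter c q s = 0 /\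
     conical_data_at q s1 kappa s /\
     ex_derive kappa s.

Definition cstar (c q : R -> V3) (Rc : R) := fun t => vadd (c t) (vscal Rc (avec q t)).

Definition HypB (a0 b0 : Rbar) (c q : R -> V3) (Rc : R) (qs : R -> V3) : Prop :=
  forall s, inI a0 b0 s ->
     ruled_surface_at (cstar c q Rc) qs s /\
     typeM2p qs s /\
     distribution_parameter (cstar c q Rc) qs s = 0.

Ltac dA HA s Hs := destruct (HA s Hs) as [[dc [dq [qq1 [qq'0 strict]]]] [arc [dcq [ddq [[qsp hsp] [dp [[ds1 [ds1eq [dh dheq]]] dk]]]]]]].

Lemma avec_eq q t : avec q t = lcross (hvec q t) (q t).
Proof. unfold avec, hvec. vring. Qed.


Lemma q_unit a0 b0 c q s1 kappa (HA : HypA a0 b0 c q s1 kappa) s (Hs : inI a0 b0 s) :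
  lip (q s) (q s) = 1.
Proof.
  dA HA s Hs. unfold spacelike in qsp. rewrite Rabs_pos_eq in qq1; lra.
Qed.

Lemma qdq0 a0 b0 c q s1 kappa (HA : HypA a0 b0 c q s1 kappa) s (Hs : inI a0 b0 s) :
  lip (q s) (dV q s) = 0.
Proof.
  dA HA s Hs. rewrite dcq in strict. rewrite lip_sym; exact strict.
Qed.

Lemma dqdq_pos a0 b0 c q s1 kappa (HA : HypA a0 b0 c q s1 kappa) s (Hs : inI a0 b0 s) :
  0 < lip (dV q s) (dV q s).
Proof.
  dA HA s Hs. unfold spacelike, hvec in hsp.
  rewrite lip_vscal_l, lip_vscal_r in hsp.
  set (k := / lnorm (dV q s)) in hsp. nra.
Qed.

Lemma N_pos a0 b0 c q s1 kappa (HA : HypA a0 b0 c q s1 kappa) s (Hs : inI a0 b0 s) :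
  0 < lnorm (dV q s) /\ lnorm (dV q s) * lnorm (dV q s) = lip (dV q s) (dV q s).
Proof.
  pose proof (dqdq_pos _ _ _ _ _ _ HA s Hs) as P.
  unfold lnorm. rewrite Rabs_pos_eq by lra. split.
  apply sqrt_lt_R0; lra. apply sqrt_sqrt; lra.
Qed.

Lemma dq_eq a0 b0 c q s1 kappa (HA : HypA a0 b0 c q s1 kappa) s (Hs : inI a0 b0 s) :
  dV q s = vscal (lnorm (dV q s)) (hvec q s).
Proof.
  destruct (N_pos _ _ _ _ _ _ HA s Hs) as [P _].
  unfold hvec, vscal. apply V3_eq; simpl; field; lra.
Qed.

Lemma h_unit a0 b0 c q s1 kappa (HA : HypA a0 b0 c q s1 kappa) s (Hs : inI a0 b0 s) :
  lip (hvec q s) (hvec q s) = 1.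
Proof.
  destruct (N_pos _ _ _ _ _ _ HA s Hs) as [P E].
  unfold hvec. rewrite lip_vscal_l, lip_vscal_r, <- E. field; lra.
Qed.

Lemma qh0 a0 b0 c q s1 kappa (HA : HypA a0 b0 c q s1 kappa) s (Hs : inI a0 b0 s) :
  lip (q s) (hvec q s) = 0.
Proof.
  unfold hvec. rewrite lip_vscal_r, (qdq0 _ _ _ _ _ _ HA s Hs). ring.
Qed.

Lemma frameA a0 b0 c q s1 kappa (HA : HypA a0 b0 c q s1 kappa) s (Hs : inI a0 b0 s) :
  lip (avec q s) (q s) = 0 /\ lip (avec q s) (hvec q s) = 0 /\
  lip (avec q s) (avec q s) = -1 /\ lcross (avec q s) (q s) = hvec q s /\
  det3 (q s) (hvec q s) (avec q s) <> 0.
Proof.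
  pose proof (q_unit _ _ _ _ _ _ HA s Hs) as E1.
  pose proof (h_unit _ _ _ _ _ _ HA s Hs) as E2.
  pose proof (qh0 _ _ _ _ _ _ HA s Hs) as E3.
  rewrite avec_eq. split; [apply lip_lcross_r|]. split; [apply lip_lcross_l|].
  split. rewrite lip_lcross_self, E1, E2, lip_sym, E3; ring.
  split. rewrite lcross_lcross, E1, lip_sym, E3. vring.
  replace (det3 (q s) (hvec q s) (lcross (hvec q s) (q s)))
    with (- det3 (q s) (hvec q s) (lcross (q s) (hvec q s))) by (unfold det3, lcross; simpl; ring).
  rewrite det3_lcross, E1, E2, E3. lra.
Qed.

Lemma frame_decomp Q H A v : lip Q Q = 1 -> lip H H = 1 -> lip Q H = 0 ->
  lip A Q = 0 -> lip A H = 0 -> lip A A = -1 -> det3 Q H A <> 0 ->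
  v = vadd (vadd (vscal (lip v Q) Q) (vscal (lip v H) H)) (vscal (- lip v A) A).
Proof.
  intros e1 e2 e3 e4 e5 e6 hd.
  pose (z := vadd v (vscal (-1) (vadd (vadd (vscal (lip v Q) Q) (vscal (lip v H) H)) (vscal (- lip v A) A)))).
  assert (Z : z = mkV 0 0 0).
  { apply (orth3_zero z Q H A); auto; unfold z;
    rewrite ?lip_vadd_l, ?lip_vscal_l, ?lip_vadd_l, ?lip_vscal_l;
    rewrite ?(lip_sym H Q), ?(lip_sym Q A), ?(lip_sym H A), ?e1, ?e2, ?e3, ?e4, ?e5, ?e6; ring. }
  unfold z in Z. destruct v. apply V3_eq; injection Z; unfold vadd, vscal; simpl; intros; lra.
Qed.


Lemma dh_eq a0 b0 c q s1 kappa (HA : HypA a0 b0 c q s1 kappa) s (Hs : inI a0 b0 s) :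
  dV (hvec q) s = vscal (lnorm (dV q s)) (vadd (vopp (q s)) (vscal (kappa s) (avec q s))).
Proof. dA HA s Hs. rewrite dheq, ds1eq. reflexivity. Qed.

Lemma diffA a0 b0 c q s1 kappa (HA : HypA a0 b0 c q s1 kappa) s (Hs : inI a0 b0 s) :
  diffV (avec q) s.
Proof.
  dA HA s Hs. apply (diffV_ext_loc (fun t => lcross (hvec q t) (q t))).
  apply filter_forall. intros t; symmetry; apply avec_eq.
  apply diffV_lcross; auto.
Qed.

Lemma dA_eq a0 b0 c q s1 kappa (HA : HypA a0 b0 c q s1 kappa) s (Hs : inI a0 b0 s) :
  dV (avec q) s = vscal (lnorm (dV q s) * kappa s) (hvec q s).
Proof.
  destruct (frameA _ _ _ _ _ _ HA s Hs) as [_ [_ [_ [AQ _]]]].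
  pose proof (dh_eq _ _ _ _ _ _ HA s Hs) as DH.
  pose proof (dq_eq _ _ _ _ _ _ HA s Hs) as DQ.
  dA HA s Hs.
  rewrite (dV_ext_loc (avec q) (fun t => lcross (hvec q t) (q t))).
  2: { apply filter_forall. intros t; apply avec_eq. }
  rewrite dV_lcross by auto. rewrite DH. rewrite DQ at 2.
  transitivity (vscal (lnorm (dV q s) * kappa s) (lcross (avec q s) (q s))).
  vring. rewrite AQ. reflexivity.
Qed.

Lemma dcs_eq a0 b0 c q s1 kappa Rc (HA : HypA a0 b0 c q s1 kappa) s (Hs : inI a0 b0 s) :
  dV (cstar c q Rc) s = vadd (q s) (vscal (Rc * lnorm (dV q s) * kappa s) (hvec q s)).
Proof.
  pose proof (diffA _ _ _ _ _ _ HA s Hs) as DA.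
  pose proof (dA_eq _ _ _ _ _ _ HA s Hs) as EA.
  dA HA s Hs. unfold cstar. rewrite dV_vadd; auto.
  rewrite dV_cscal, EA, dcq. vring. apply diffV_cscal; auto.
Qed.

Lemma diff_cs a0 b0 c q s1 kappa Rc (HA : HypA a0 b0 c q s1 kappa) s (Hs : inI a0 b0 s) :
  diffV (cstar c q Rc) s.
Proof.
  pose proof (diffA _ _ _ _ _ _ HA s Hs) as DA.
  dA HA s Hs. unfold cstar. apply diffV_vadd; auto. apply diffV_cscal; auto.
Qed.

Lemma nu_eq a0 b0 c q s1 kappa (HA : HypA a0 b0 c q s1 kappa) s (Hs : inI a0 b0 s) :
  lnorm (dV q s) = lip (dV q s) (hvec q s).
Proof.
  transitivity (lnorm (dV q s) * lip (hvec q s) (hvec q s)).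
  rewrite (h_unit _ _ _ _ _ _ HA s Hs); ring.
  rewrite <- lip_vscal_l, <- (dq_eq _ _ _ _ _ _ HA s Hs). reflexivity.
Qed.

Lemma nu_ex a0 b0 c q s1 kappa (HA : HypA a0 b0 c q s1 kappa) s (Hs : inI a0 b0 s) :
  ex_derive (fun t => lnorm (dV q t)) s.
Proof.
  apply (ex_derive_ext_loc (fun t => lip (dV q t) (hvec q t))).
  apply (filter_imp _ _ (fun t Ht => eq_sym (nu_eq _ _ _ _ _ _ HA t Ht)) (inI_loc _ _ _ Hs)).
  dA HA s Hs. apply ex_derive_lip; auto.
Qed.

Lemma s1dd a0 b0 c q s1 kappa (HA : HypA a0 b0 c q s1 kappa) s (Hs : inI a0 b0 s) :
  Derive (Derive s1) s = Derive (fun t => lnorm (dV q t)) s.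
Proof.
  apply Derive_ext_loc.
  eapply filter_imp; [|exact (inI_loc _ _ _ Hs)]. intros t Ht. dA HA t Ht. exact ds1eq.
Qed.

Lemma ddcs a0 b0 c q s1 kappa Rc (HA : HypA a0 b0 c q s1 kappa) s (Hs : inI a0 b0 s) :
  diffV (dV (cstar c q Rc)) s /\
  dV (dV (cstar c q Rc)) s =
  vadd (dV q s) (vadd (vscal (Rc * (Derive (fun t => lnorm (dV q t)) s * kappa s
                                   + lnorm (dV q s) * Derive kappa s)) (hvec q s))
                      (vscal (Rc * lnorm (dV q s) * kappa s) (dV (hvec q) s))).
Proof.
  pose proof (nu_ex _ _ _ _ _ _ HA s Hs) as NX.
  assert (L : locally s (fun t => vadd (q t) (vscal (Rc * lnorm (dV q t) * kappa t) (hvec q t))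
                                 = dV (cstar c q Rc) t)).
  { eapply filter_imp; [|exact (inI_loc _ _ _ Hs)]. intros t Ht.
    symmetry; apply (dcs_eq _ _ _ _ _ _ Rc HA t Ht). }
  dA HA s Hs.
  assert (KX : ex_derive (fun t => Rc * lnorm (dV q t) * kappa t) s).
  { apply exd_mult; auto. apply exd_scal; auto. }
  split.
  - eapply diffV_ext_loc. exact L. apply diffV_vadd; auto. apply diffV_vscal; auto.
  - rewrite <- (dV_ext_loc _ _ _ L). rewrite dV_vadd; auto.
    2: apply diffV_vscal; auto.
    rewrite dV_vscal; auto.
    rewrite Derive_mult; auto. 2: apply exd_scal; auto.
    rewrite Derive_scal. vring.
Qed.


Ltac dB HB s Hs := destruct (HB s Hs) as [[dcs [dqs [pp1 [pp'0 strictS]]]] [[psp htm] dps]].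

Lemma p_unit a0 b0 c q Rc qs (HB : HypB a0 b0 c q Rc qs) s (Hs : inI a0 b0 s) :
  lip (qs s) (qs s) = 1.
Proof. dB HB s Hs. unfold spacelike in psp. rewrite Rabs_pos_eq in pp1; lra. Qed.

Lemma pdp0 a0 b0 c q Rc qs (HB : HypB a0 b0 c q Rc qs) s (Hs : inI a0 b0 s) :
  lip (qs s) (dV qs s) = 0.
Proof.
  assert (D : Derive (fun t => lip (qs t) (qs t)) s = Derive (fun _ => 1) s).
  { apply Derive_ext_loc. eapply filter_imp; [|exact (inI_loc _ _ _ Hs)].
    intros t Ht. exact (p_unit _ _ _ _ _ _ HB t Ht). }
  dB HB s Hs.
  rewrite Derive_lip, Derive_const, lip_sym in D by auto. lra.
Qed.

Lemma dpdp_neg a0 b0 c q Rc qs (HB : HypB a0 b0 c q Rc qs) s (Hs : inI a0 b0 s) :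
  lip (dV qs s) (dV qs s) < 0.
Proof.
  dB HB s Hs. unfold timelike, hvec in htm.
  rewrite lip_vscal_l, lip_vscal_r in htm.
  set (k := / lnorm (dV qs s)) in htm. nra.
Qed.

Lemma W_par a0 b0 c q Rc qs (HB : HypB a0 b0 c q Rc qs) s (Hs : inI a0 b0 s) :
  dV (cstar c q Rc) s = vscal (lip (dV (cstar c q Rc) s) (qs s)) (qs s).
Proof.
  pose proof (p_unit _ _ _ _ _ _ HB s Hs) as E1.
  pose proof (pdp0 _ _ _ _ _ _ HB s Hs) as E2.
  pose proof (dpdp_neg _ _ _ _ _ _ HB s Hs) as E3.
  dB HB s Hs.
  set (W := dV (cstar c q Rc) s) in *. set (P := qs s) in *. set (P' := dV qs s) in *.
  set (al := lip W P).
  assert (Dt : det3 W P P' = 0).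
  { unfold distribution_parameter in dps. fold W P P' in dps.
    apply Rmult_integral in dps. destruct dps as [h|h]; auto.
    exfalso. revert h. apply Rinv_neq_0_compat. lra. }
  pose (z := vadd W (vscal (- al) P)).
  assert (Z : z = mkV 0 0 0).
  { apply (orth3_zero z P P' (lcross P P')).
    - unfold z. rewrite lip_vadd_l, lip_vscal_l, E1. unfold al. ring.
    - unfold z. rewrite lip_vadd_l, lip_vscal_l, E2, lip_sym, strictS. ring.
    - rewrite lip_lcross_det.
      replace (det3 z P P') with (det3 W P P') by (unfold z, det3, vadd, vscal; simpl; ring).
      rewrite Dt. ring.
    - rewrite det3_lcross, E1, E2. lra. }
  unfold z in Z. fold al. destruct W as [w1 w2 w3]. destruct P as [p1 p2 p3].
  injection Z. unfold vadd, vscal; simpl. intros. apply V3_eq; simpl; lra.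
Qed.


Definition formula (s1 kappa : R -> R) (Rc s : R) : Prop :=
     Derive kappa s =
       - (/ Rc) * (Rc ^ 2 * (kappa s) ^ 2 * (Derive s1 s) ^ 2 + 1)
       - (/ Derive s1 s) * Derive (Derive s1) s * kappa s.

Lemma core a0 b0 c q s1 kappa Rc qs (Rc0 : Rc <> 0)
  (HA : HypA a0 b0 c q s1 kappa) (HB : HypB a0 b0 c q Rc qs) s (Hs : inI a0 b0 s) :
  lip (q s) (qs s) <> 0 /\
  ((lip (dV qs s) (q s) = 0 /\ lip (dV qs s) (hvec q s) = 0) -> formula s1 kappa Rc s) /\
  (formula s1 kappa Rc s ->
     dV qs s = vscal (Rc * lnorm (dV q s) ^ 2 * kappa s ^ 2 * lip (q s) (qs s)) (avec q s)).
Proof.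
  pose proof (q_unit _ _ _ _ _ _ HA s Hs) as QQ.
  pose proof (h_unit _ _ _ _ _ _ HA s Hs) as HH.
  pose proof (qh0 _ _ _ _ _ _ HA s Hs) as QH.
  destruct (frameA _ _ _ _ _ _ HA s Hs) as [AQ [AH [AA [_ DT]]]].
  destruct (N_pos _ _ _ _ _ _ HA s Hs) as [Npos _].
  pose proof (dq_eq _ _ _ _ _ _ HA s Hs) as DQ.
  pose proof (dh_eq _ _ _ _ _ _ HA s Hs) as DH.
  pose proof (dcs_eq _ _ _ _ _ _ Rc HA s Hs) as WE.
  pose proof (W_par _ _ _ _ _ _ HB s Hs) as WP.
  destruct (ddcs _ _ _ _ _ _ Rc HA s Hs) as [DW E1].
  pose proof (s1dd _ _ _ _ _ _ HA s Hs) as S1D.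
  pose proof (pdp0 _ _ _ _ _ _ HB s Hs) as PP'.
  assert (HQ : lip (hvec q s) (q s) = 0) by (rewrite lip_sym; auto).
  assert (QA : lip (q s) (avec q s) = 0) by (rewrite lip_sym; auto).
  assert (HA' : lip (hvec q s) (avec q s) = 0) by (rewrite lip_sym; auto).
  set (alf := fun t => lip (dV (cstar c q Rc) t) (qs t)).
  assert (AX : ex_derive alf s).
  { unfold alf. dB HB s Hs. apply ex_derive_lip; auto. }
  assert (E2 : dV (dV (cstar c q Rc)) s =
               vadd (vscal (Derive alf s) (qs s)) (vscal (alf s) (dV qs s))).
  { rewrite <- dV_vscal; auto. 2: { dB HB s Hs; auto. }
    apply dV_ext_loc. eapply filter_imp; [|exact (inI_loc _ _ _ Hs)].
    intros t Ht. exact (W_par _ _ _ _ _ _ HB t Ht). }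
  assert (strictB : lip (dV qs s) (dV (cstar c q Rc) s) = 0) by (dB HB s Hs; auto).
  dA HA s Hs.
  set (Q := q s) in *. set (H := hvec q s) in *. set (A := avec q s) in *.
  set (N := lnorm (dV q s)) in *. set (K := kappa s) in *.
  set (K' := Derive kappa s) in *. set (nu' := Derive (fun t => lnorm (dV q t)) s) in *.
  set (P := qs s) in *. set (P' := dV qs s) in *.
  set (W := dV (cstar c q Rc) s) in *. set (W' := dV (dV (cstar c q Rc)) s) in *.
  set (al := alf s) in *. set (al' := Derive alf s) in *.
  set (be := lip Q P).
  assert (alW : al = lip W P) by reflexivity.
  clearbody al al'.
  assert (WQ : lip W Q = 1).
  { rewrite WE, lip_vadd_l, lip_vscal_l, QQ, HQ; ring. }
  assert (WH : lip W H = Rc * N * K).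
  { rewrite WE, lip_vadd_l, lip_vscal_l, QH, HH; ring. }
  assert (WA : lip W A = 0).
  { rewrite WE, lip_vadd_l, lip_vscal_l, QA, HA'; ring. }
  assert (albe : al * be = 1).
  { rewrite <- WQ, WP, lip_vscal_l, <- alW. unfold be. rewrite lip_sym. reflexivity. }
  assert (PH : lip P H = Rc * N * K * be).
  { rewrite <- WH, WP, lip_vscal_l, <- alW.
    transitivity (lip P H * (al * be)). rewrite albe; ring. ring. }
  assert (PA : lip P A = 0).
  { transitivity (lip P A * (al * be)). rewrite albe; ring.
    replace (lip P A * (al * be)) with ((al * lip P A) * be) by ring.
    rewrite <- lip_vscal_l, alW, <- WP, WA. ring. }
  assert (PQ : lip P Q = be) by (unfold be; apply lip_sym).
  assert (I1 : al' * be + al * lip P' Q = - Rc * N ^ 2 * K).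
  { transitivity (lip W' Q).
    - rewrite E2, lip_vadd_l, !lip_vscal_l, PQ. ring.
    - rewrite E1, DH, DQ. rewrite !lip_vadd_l, !lip_vscal_l, !lip_vadd_l, lip_vopp_l, lip_vscal_l.
      rewrite HQ, QQ, AQ. fold N. ring. }
  assert (I2 : al' * (Rc * N * K * be) + al * lip P' H = N + Rc * (nu' * K + N * K')).
  { transitivity (lip W' H).
    - rewrite E2, lip_vadd_l, !lip_vscal_l, PH. ring.
    - rewrite E1, DH, DQ. rewrite !lip_vadd_l, !lip_vscal_l, !lip_vadd_l, lip_vopp_l, lip_vscal_l.
      rewrite HH, QH, AH. fold N. ring. }
  assert (I3 : al * lip P' A = - Rc * N ^ 2 * K ^ 2).
  { transitivity (lip W' A).
    - rewrite E2, lip_vadd_l, !lip_vscal_l, PA. ring.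
    - rewrite E1, DH, DQ. rewrite !lip_vadd_l, !lip_vscal_l, !lip_vadd_l, lip_vopp_l, lip_vscal_l.
      rewrite HA', QA, AA. fold N. ring. }
  assert (I4 : lip P' Q + Rc * N * K * lip P' H = 0).
  { rewrite <- strictB, WE, lip_vadd_r, lip_vscal_r. ring. }
  assert (albe0 : al <> 0 /\ be <> 0).
  { split; intro h; rewrite h in albe; lra. }
  destruct albe0 as [al0 be0].
  assert (FE : formula s1 kappa Rc s <->
               N + Rc * (nu' * K + N * K') = - Rc ^ 2 * N ^ 3 * K ^ 2).
  { unfold formula. rewrite ds1eq, S1D. fold K K' N nu'. split; intro h.
    - rewrite h. field. split; lra.
    - apply (Rmult_eq_reg_l (Rc * N)). 2: { apply Rmult_integral_contrapositive; split; lra. }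
      replace (Rc * N * K') with (- Rc ^ 2 * N ^ 3 * K ^ 2 - N - Rc * nu' * K) by (rewrite <- h; ring).
      field. split; lra. }
  split; [exact be0|]. split.
  - intros [x0 y0]. apply FE. rewrite x0 in I1. rewrite y0 in I2.
    assert (al' = - Rc * N ^ 2 * K * al).
    { transitivity (al' * (al * be)). rewrite albe; ring.
      replace (al' * (al * be)) with (al * (al' * be)) by ring.
      replace (al' * be) with (- Rc * N ^ 2 * K) by lra. ring. }
    rewrite <- I2. subst al'.
    replace (- Rc * N ^ 2 * K * al * (Rc * N * K * be) + al * 0)
      with (- Rc ^ 2 * N ^ 3 * K ^ 2 * (al * be)) by ring.
    rewrite albe. ring.
  - intros F. apply FE in F. rewrite F in I2.
    set (x := lip P' Q) in *. set (y := lip P' H) in *. set (z := lip P' A) in *.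
    assert (Y : al * (y - Rc * N * K * x) = 0).
    { replace (al * (y - Rc * N * K * x)) with
        ((al' * (Rc * N * K * be) + al * y) - Rc * N * K * (al' * be + al * x)) by ring.
      rewrite I2, I1. ring. }
    apply Rmult_integral in Y. destruct Y as [Y|Y]; [contradiction|].
    assert (X : x * (1 + (Rc * N * K) ^ 2) = 0).
    { assert (Yy : y = Rc * N * K * x) by lra.
      replace (x * (1 + (Rc * N * K) ^ 2)) with (x + Rc * N * K * y) by (rewrite Yy; ring).
      exact I4. }
    apply Rmult_integral in X. destruct X as [X|X].
    2: { exfalso. pose proof (pow2_ge_0 (Rc * N * K)). lra. }
    assert (Y0 : y = 0) by (rewrite X in Y; lra).
    assert (Z : z = - Rc * N ^ 2 * K ^ 2 * be).
    { transitivity (z * (al * be)). rewrite albe; ring.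
      replace (z * (al * be)) with ((al * z) * be) by ring. rewrite I3. ring. }
    rewrite (frame_decomp Q H A P') at 1; auto.
    fold x y z. rewrite X, Y0, Z. fold be. vring.
Qed.


Lemma inI_between a0 b0 x y z : inI a0 b0 x -> inI a0 b0 y -> x <= z <= y -> inI a0 b0 z.
Proof.
  intros [hx _] [_ hy] [h1 h2]. split.
  - eapply Rbar_lt_le_trans. exact hx. exact h1.
  - eapply Rbar_le_lt_trans. 2: exact hy. exact h2.
Qed.

Theorem theorem6p2
  (a0 b0 : Rbar) (c q : R -> V3) (s1 kappa : R -> R) (Rc : R) (qs : R -> V3) :
  Rc <> 0 ->
  (forall s, inI a0 b0 s ->
     ruled_surface_at c q s /\ arclength_at c s /\
     dV c s = q s /\
     diffV (dV q) s /\
     typeM1p q s /\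
     distribution_parameter c q s = 0 /\
     conical_data_at q s1 kappa s /\
     ex_derive kappa s) ->
  (forall s, inI a0 b0 s ->
     ruled_surface_at (fun t => vadd (c t) (vscal Rc (avec q t))) qs s /\
     typeM2p qs s /\
     distribution_parameter (fun t => vadd (c t) (vscal Rc (avec q t))) qs s = 0) ->
  (mannheim_offset_on a0 b0 q qs <->
   forall s, inI a0 b0 s ->
     Derive kappa s =
       - (/ Rc) * (Rc ^ 2 * (kappa s) ^ 2 * (Derive s1 s) ^ 2 + 1)
       - (/ Derive s1 s) * Derive (Derive s1) s * kappa s).
Proof.
  intros Rc0 H1 H2.
  assert (HA : HypA a0 b0 c q s1 kappa) by exact H1.
  assert (HB : HypB a0 b0 c q Rc qs) by exact H2.
  clear H1 H2.
  split.
  - intros [sg [Hsg Hm]] s Hs.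
    destruct (core _ _ _ _ _ _ _ _ Rc0 HA HB s Hs) as [_ [F _]]. apply F.
    destruct (frameA _ _ _ _ _ _ HA s Hs) as [AQ [AH [AA _]]].
    pose proof (Hm s Hs) as M. unfold hvec in M. rewrite dV_cscal in M.
    set (k := / lnorm (vscal sg (dV qs s)) * sg).
    assert (AE : avec q s = vscal k (dV qs s)).
    { rewrite <- M. unfold k. vring. }
    rewrite AE in AQ, AH, AA. rewrite lip_vscal_l in AQ, AH, AA. rewrite lip_vscal_r in AA.
    assert (k <> 0) by (intro h; rewrite h in AA; lra).
    split.
    + apply Rmult_integral in AQ. destruct AQ; [contradiction|assumption].
    + apply Rmult_integral in AH. destruct AH; [contradiction|assumption].
  - intros FF.
    destruct (classic (exists s0, inI a0 b0 s0)) as [[s0 Hs0]|No].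
    2: { exists 1. split. left; reflexivity. intros s Hs. exfalso. apply No. eauto. }
    set (be := fun t => lip (q t) (qs t)).
    assert (be0 : forall t, inI a0 b0 t -> be t <> 0).
    { intros t Ht. exact (proj1 (core _ _ _ _ _ _ _ _ Rc0 HA HB t Ht)). }
    set (sg := if Rlt_dec 0 (Rc * be s0) then 1 else -1).
    set (f := fun t => sg * Rc * be t).
    assert (f0 : forall t, inI a0 b0 t -> f t <> 0).
    { intros t Ht. unfold f. apply Rmult_integral_contrapositive; split; auto.
      apply Rmult_integral_contrapositive; split; auto. unfold sg. destruct Rlt_dec; lra. }
    assert (fs0 : 0 < f s0).
    { unfold f, sg. destruct Rlt_dec as [h|h]. lra.
      assert (Rc * be s0 <> 0). { apply Rmult_integral_contrapositive; split; auto. }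
      lra. }
    assert (fc : forall t, inI a0 b0 t -> continuity_pt f t).
    { intros t Ht. apply continuity_pt_filterlim. apply (ex_derive_continuous f t).
      unfold f. apply exd_scal. unfold be.
      dA HA t Ht. dB HB t Ht. apply ex_derive_lip; auto. }
    assert (key : forall s, inI a0 b0 s -> 0 < f s).
    { intros s Hs. destruct (Rlt_or_le 0 (f s)) as [h|h]; auto. exfalso.
      assert (fneg : f s < 0) by (pose proof (f0 s Hs); lra).
      destruct (Rtotal_order s s0) as [lt|[eq|gt]].
      - destruct (IVT_interv f s s0) as [z [hz fz]]; auto.
        intros a ha. apply fc. eapply inI_between; [exact Hs|exact Hs0|exact ha].
        apply (f0 z); auto. eapply inI_between; [exact Hs|exact Hs0|exact hz].
      - subst; lra.
      - destruct (IVT_interv (fun t => - f t) s0 s) as [z [hz fz]]; auto.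
        intros a ha. apply continuity_pt_opp. apply fc. eapply inI_between; [exact Hs0|exact Hs|exact ha].
        lra. lra.
        apply (f0 z). eapply inI_between; [exact Hs0|exact Hs|exact hz]. lra. }
    exists sg. split. { unfold sg; destruct Rlt_dec; auto. }
    intros s Hs.
    destruct (core _ _ _ _ _ _ _ _ Rc0 HA HB s Hs) as [_ [_ G]].
    pose proof (G (FF s Hs)) as D. clear G.
    destruct (frameA _ _ _ _ _ _ HA s Hs) as [_ [_ [AA _]]].
    pose proof (dpdp_neg _ _ _ _ _ _ HB s Hs) as NEG.
    unfold hvec. rewrite dV_cscal, D.
    set (mu := Rc * lnorm (dV q s) ^ 2 * kappa s ^ 2 * lip (q s) (qs s)) in *.
    rewrite D, lip_vscal_l, lip_vscal_r, AA in NEG.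
    set (m := sg * mu).
    replace (vscal sg (vscal mu (avec q s))) with (vscal m (avec q s)) by (unfold m; vring).
    assert (mpos : 0 < m).
    { assert (m = f s * (lnorm (dV q s) ^ 2 * kappa s ^ 2)) as ->.
      { unfold m, mu, f, be. ring. }
      pose proof (key s Hs).
      assert (mu <> 0) by (intro h; rewrite h in NEG; lra).
      assert (kappa s <> 0).
      { intro h. apply H0. unfold mu. rewrite h. ring. }
      assert (lnorm (dV q s) <> 0) by (pose proof (N_pos _ _ _ _ _ _ HA s Hs); lra).
      apply Rmult_lt_0_compat; auto.
      assert (0 < lnorm (dV q s) ^ 2) by (apply pow2_gt_0; auto).
      assert (0 < kappa s ^ 2) by (apply pow2_gt_0; auto).
      apply Rmult_lt_0_compat; auto. }
    assert (LN : lnorm (vscal m (avec q s)) = m).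
    { unfold lnorm. rewrite lip_vscal_l, lip_vscal_r, AA.
      replace (m * (m * -1)) with (- (m * m)) by ring.
      rewrite Rabs_Ropp, Rabs_pos_eq by nra. apply sqrt_square. lra. }
    assert (Nn : lnorm (dV q s) <> 0) by (apply Rgt_not_eq; exact (proj1 (N_pos _ _ _ _ _ _ HA s Hs))).
    assert (mn : m <> 0) by (apply Rgt_not_eq; exact mpos).
    rewrite LN. apply V3_eq; unfold vscal; simpl; field; auto.
Qed.
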